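(* Let $D=(V,A)$ be a directed graph on $n$ vertices with distinct vertices $s,t$, let $M>0$, and let $\mathbf y:V\to\mathbb R$ satisfy $|\mathbf y(u)-\mathbf y(v)|\le M$ for all $u,v\in V$. Define the energy of an arc $(u,v)$ as $\mathcal E(u,v)=\int_{\mathbf y(v)-\mathbf y(u)}^{M}\frac{1}{\max\{x,0\}+1}\,dx$, and the total energy of $D$ as $\sum_{(u,v)\in A}\mathcal E(u,v)$. Let $D'$ be obtained from $D$ by reversing every arc of a simple directed path from $s$ to $t$ in $D$ (with $\mathbf y$ unchanged). Then the total energy of $D'$ exceeds the total energy of $D$ by at most $\mathbf y(t)-\mathbf y(s)+(n-1)\ln(M+1)$. *)

(* Defs.v *)
From mathcomp Require Import all_boot.
From Stdlib Require Import Reals.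
From Coquelicot Require Import Coquelicot.

Set Implicit Arguments.
Unset Strict Implicit.
Unset Printing Implicit Defensive.

Local Open Scope R_scope.

(* A directed (multi)graph on the finite vertex type V is given by its list of
   arcs A : seq (V * V) (arc (u,v) goes from u to v). *)

Definition arc_energy {V : Type} (y : V -> R) (M : R) (e : V * V) : R :=
  RInt (fun x => 1 / (Rmax x 0 + 1)) (y e.2 - y e.1) M.

Definition total_energy {V : Type} (y : V -> R) (M : R) (A : seq (V * V)) : R :=
  foldr Rplus 0 (map (arc_energy y M) A).

Definition path_arcs {V : Type} (p : seq V) : seq (V * V) := zip p (behead p).

Definition simple_dipath {V : eqType} (A : seq (V * V)) (s t : V) (p : seq V) : Prop :=
  [/\ head s p = s, last s p = t, p != [::], uniq p
    & all (fun e => e \in A) (path_arcs p)].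

Definition reverse_path {V : eqType} (A : seq (V * V)) (p : seq V) : seq (V * V) :=
  foldr (fun e B => rem e B) A (path_arcs p) ++
  map (fun e => (e.2, e.1)) (path_arcs p).

(* Main.v *)
Require Import Defs.
From mathcomp Require Import all_boot.
From Stdlib Require Import Reals Lra.
From Coquelicot Require Import Coquelicot.

Local Open Scope R_scope.

Definition ff (x : R) : R := 1 / (Rmax x 0 + 1).
Definition FF (x : R) : R := if Rle_dec x 0 then x else ln (x + 1).

Lemma FF_neg x : x <= 0 -> FF x = x.
Proof. by rewrite /FF; case: Rle_dec => //; lra. Qed.

Lemma FF_pos x : 0 <= x -> FF x = ln (x + 1).
Proof.
rewrite /FF; case: Rle_dec => // H H'.
have E : x = 0 by lra. subst x. by rewrite Rplus_0_l ln_1.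
Qed.

Lemma int_neg a b : a <= 0 -> b <= 0 -> is_RInt ff a b (b - a).
Proof.
move=> Ha Hb.
apply: (is_RInt_ext (fun=> 1)).
  move=> x [H1 H2]; rewrite /ff Rmax_right.
    by rewrite Rplus_0_l /Rdiv Rinv_1 Rmult_1_l.
  have : Rmax a b <= 0 by apply: Rmax_lub.
  lra.
have H := is_RInt_const a b 1.
by rewrite /scal /= /mult /= Rmult_1_r in H.
Qed.

Lemma int_pos a b : 0 <= a -> 0 <= b -> is_RInt ff a b (ln (b + 1) - ln (a + 1)).
Proof.
move=> Ha Hb.
have Hm : 0 <= Rmin a b by apply: Rmin_glb.
apply: (is_RInt_ext (fun x => 1 / (x + 1))).
  move=> x [H1 H2]; rewrite /ff Rmax_left //; lra.
apply: (is_RInt_derive (fun x => ln (x + 1))).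
  move=> x [H1 H2]. auto_derive. lra. field. lra.
move=> x [H1 H2]. apply: ex_derive_continuous. auto_derive. lra.
Qed.

Lemma int_0 a : is_RInt ff 0 a (FF a - FF 0).
Proof.
case: (Rle_dec a 0) => H.
  rewrite FF_neg // FF_neg; last lra.
  by apply: int_neg; lra.
rewrite FF_pos; last lra. rewrite FF_pos; last lra.
apply: int_pos; lra.
Qed.

Lemma int_all a b : RInt ff a b = FF b - FF a.
Proof.
apply: is_RInt_unique.
have H1 := is_RInt_swap _ _ _ _ (int_0 a).
have H2 := is_RInt_Chasles _ _ _ _ _ _ H1 (int_0 b).
move: H2; rewrite /plus /opp /=. by have -> : - (FF a - FF 0) + (FF b - FF 0) = FF b - FF a by ring.
Qed.

Lemma ln_ge0 x : 0 <= x -> 0 <= ln (x + 1).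
Proof.
move=> H; rewrite -ln_1; case: (Req_dec x 0) => [->|Hx]; first by rewrite Rplus_0_l; lra.
apply: Rlt_le; apply: ln_increasing; lra.
Qed.

Lemma arc_diff {V : Type} (y : V -> R) M u v : (forall a b : V, Rabs (y a - y b) <= M) ->
  arc_energy y M (v, u) - arc_energy y M (u, v) <= y v - y u + ln (M + 1).
Proof.
move=> HM; rewrite /arc_energy /=.
rewrite -/ff !int_all.
have HB := HM v u.
have HM0 : 0 <= M by have := Rabs_pos (y v - y u); lra.
have Hl := ln_ge0 _ HM0.
case: (Rle_dec 0 (y v - y u)) => H.
  rewrite Rabs_right in HB; last lra.
  rewrite (FF_pos (y v - y u)); last lra. rewrite (FF_neg (y u - y v)); last lra.
  have : ln (y v - y u + 1) <= ln (M + 1).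
    case: (Req_dec (y v - y u) M) => [->|Hne]; first lra.
    apply: Rlt_le; apply: ln_increasing; lra.
  lra.
rewrite (FF_neg (y v - y u)); last lra. rewrite (FF_pos (y u - y v)); last lra.
have := ln_ge0 (y u - y v) ltac:(lra). lra.
Qed.

Lemma tot_cons {V : Type} (y : V -> R) M a B :
  total_energy y M (a :: B) = arc_energy y M a + total_energy y M B.
Proof. by []. Qed.

Lemma tot_cat {V : Type} (y : V -> R) M B C :
  total_energy y M (B ++ C) = total_energy y M B + total_energy y M C.
Proof.
elim: B => [|a B IH]; first by rewrite /= Rplus_0_l.
by rewrite cat_cons !tot_cons IH Rplus_assoc.
Qed.

Lemma tot_rem {V : eqType} (y : V -> R) M e B : e \in B ->
  total_energy y M (rem e B) = total_energy y M B - arc_energy y M e.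
Proof.
elim: B => [//|a B IH]; rewrite in_cons rem_cons.
have [Hae|Hae] := eqVneq a e.
  by subst a => _; rewrite tot_cons; ring.
move=> /= H.
rewrite !tot_cons IH //; ring.
Qed.

Lemma mem_foldr_rem {V : eqType} (A es : seq V) x : x \in A -> x \notin es ->
  x \in foldr (fun e B => rem e B) A es.
Proof.
elim: es => [//|e es IH] HA; rewrite in_cons negb_or => /andP [H1 H2] /=.
by apply: rem_mem => //; apply: IH.
Qed.

Lemma tot_foldr {V : eqType} (y : V -> R) M A es : uniq es -> all (fun e => e \in A) es ->
  total_energy y M (foldr (fun e B => rem e B) A es) = total_energy y M A - total_energy y M es.
Proof.
elim: es => [|e es IH] /=; first by rewrite Rminus_0_r.
move=> /andP [Hn Hu] /andP [He Ha].
rewrite tot_rem; last by apply: mem_foldr_rem.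
rewrite IH // tot_cons; ring.
Qed.

Lemma path_bound {V : eqType} (y : V -> R) M (HM : forall a b : V, Rabs (y a - y b) <= M) q x :
  total_energy y M (map (fun e => (e.2, e.1)) (path_arcs (x :: q)))
  - total_energy y M (path_arcs (x :: q))
  <= y (last x q) - y x + INR (size q) * ln (M + 1).
Proof.
elim: q x => [|z q IH] x.
  rewrite /path_arcs /= /total_energy /=; lra.
have -> : path_arcs (x :: z :: q) = (x, z) :: path_arcs (z :: q) by [].
rewrite map_cons !tot_cons.
have H1 := IH z. have H2 := arc_diff y M x z HM.
have -> : INR (size (z :: q)) = INR (size q) + 1 by apply: S_INR. simpl in H1, H2 |- *. lra.
Qed.

Theorem lemma3p7 (V : finType) (A : seq (V * V)) (s t : V) (M : R) (y : V -> R)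
  (p : seq V) :
  s <> t -> 0 < M ->
  (forall u v : V, Rabs (y u - y v) <= M) ->
  simple_dipath A s t p ->
  total_energy y M (reverse_path A p) - total_energy y M A
    <= y t - y s + (INR #|V| - 1) * ln (M + 1).
Proof.
move=> _ HM0 HM [Hh Hl Hne Hu Ha].
case: p Hh Hl Hne Hu Ha => [//|x q] /= Hh Hl _ Hu Ha.
subst x.
have Huarcs : uniq (path_arcs (s :: q)).
  rewrite /path_arcs /=. apply: zip_uniql. done.
rewrite /reverse_path tot_cat tot_foldr //.
have HB := path_bound y M HM q s.
rewrite Hl in HB.
have Hsz : (size (s :: q) <= #|V|)%nat.
  have Hu' : uniq (s :: q) by [].
  rewrite -(card_uniqP Hu'). apply: max_card.
have Hle : INR (size q) <= INR #|V| - 1.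
  have : INR (size q).+1 <= INR #|V| by apply: le_INR; apply/leP.
  rewrite S_INR; lra.
have := ln_ge0 _ (Rlt_le _ _ HM0).
move=> Hl0. have := Rmult_le_compat_r _ _ _ Hl0 Hle. move: HB. set X := total_energy y M (map _ _). set Y := total_energy y M (path_arcs _). set Z := total_energy _ _ A. move=> h1 h2. clearbody X Y Z. have -> : Z - Y + X - Z = X - Y by ring. apply: (Rle_trans _ _ _ h1). apply: Rplus_le_compat_l; exact: h2.
Qed.
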